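(* Every monotone protocol for the game $G_n$ has cost at least $\lfloor\sqrt{n}\rfloor$.
   Context: The game $G_n$ ($n$ a positive integer): Alice receives, as a stream, a permutation $\sigma=(\sigma_1,\dots,\sigma_n)$ of $[n]=\{1,\dots,n\}$ followed by a bit $b\in\{0,1\}$. She has an array $\mathbf{v}=(v_1,\dots,v_n)$ whose cells are initially empty. For each $i<n$, upon receiving $\sigma_i$ she writes a bit in cell $\sigma_i$, which cannot later be changed. Upon receiving $\sigma_n$ and $b$ she writes $b$ in cell $\sigma_n$. Bob receives the completed array $\mathbf{v}\in\{0,1\}^n$ and outputs a set $J\subseteq[n]$ as a function of $\mathbf{v}$. A protocol is valid if $\sigma_n\in J$ for all $\sigma,b$; its cost is the maximum of $|J|$ over all $\sigma,b$. Protocols are required to be valid. A partial assignment is an element of $\{0,1,*\}^n$ ($*$ = unfilled). An order oblivious protocol is one given by maps $A_1,\dots,A_n$ from partial assignments to $\{0,1\}$: when $\sigma_i$ ($i<n$) arrives and the current partial assignment is $\mathbf{v}$, Alice writes $A_{\sigma_i}(\mathbf{v})$ in cell $\sigma_i$. For partial assignments $\alpha,\beta$, $\beta$ extends $\alpha$ ($\beta\ge\alpha$) if $\beta$ is obtained from $\alpha$ by fixing additional cells. The protocol is monotone if it is order oblivious and each $A_i$ is monotone: $\beta\ge\alpha$ implies $A_i(\beta)\ge A_i(\alpha)$. *)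

(* Defs.v *)
From mathcomp Require Import all_boot.
Set Implicit Arguments. Unset Strict Implicit. Unset Printing Implicit Defensive.

(* Partial assignments over [n] = 'I_n : None = unfilled ( * ), Some b = bit b. *)
Definition passign (n : nat) := {ffun 'I_n -> option bool}.

Definition empty_pa (n : nat) : passign n := [ffun _ => None].

Definition extends n (beta alpha : passign n) : Prop :=
  forall i b, alpha i = Some b -> beta i = Some b.

Definition fill n (v : passign n) (i : 'I_n) (b : bool) : passign n :=
  [ffun j => if j == i then Some b else v j].

(* An order oblivious protocol for Alice: A i v is the bit written in cell i
   when the current partial assignment is v. *)
Definition alice n := 'I_n -> passign n -> bool.

Definition monotone_alice n (A : alice n) : Prop :=
  forall i alpha beta, extends beta alpha -> A i alpha <= A i beta.

(* Alice processes the stream s (the first n-1 elements of sigma). *)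
Fixpoint run n (A : alice n) (s : seq 'I_n) (v : passign n) : passign n :=
  match s with
  | [::] => v
  | i :: s' => run A s' (fill v i (A i v))
  end.

(* The completed array Bob receives, for sigma = rcons s x (so sigma_n = x)
   and final bit b. Cells are all filled when sigma is a permutation. *)
Definition final_array n (A : alice n) (s : seq 'I_n) (x : 'I_n) (b : bool)
  : {ffun 'I_n -> bool} :=
  [ffun j => odflt false (fill (run A s (empty_pa n)) x b j)].

Definition bob n := {ffun 'I_n -> bool} -> {set 'I_n}.

Definition is_perm_seq n (sigma : seq 'I_n) : bool :=
  uniq sigma && (size sigma == n).

Definition valid n (A : alice n) (B : bob n) : Prop :=
  forall s x b, is_perm_seq (rcons s x) -> x \in B (final_array A s x b).

Definition isqrt (n : nat) : nat := \max_(k < n.+1 | k * k <= n) k.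

(* Main.v *)
Require Import Defs.
From mathcomp Require Import all_boot zify.
From Stdlib Require Import Classical.
Set Implicit Arguments. Unset Strict Implicit. Unset Printing Implicit Defensive.

Definition st n (y o : seq 'I_n) : passign n :=
  [ffun j => if j \in y then Some false else if j \in o then Some true else None].

Fixpoint zok n (A : alice n) (acc s : seq 'I_n) : bool :=
  match s with [::] => true | i :: s' => (~~ A i (st acc [::])) && zok A (i :: acc) s' end.

Lemma st_eq n (y y' o o' : seq 'I_n) : y =i y' -> o =i o' -> st y o = st y' o'.
Proof. by move=> Hy Ho; apply/ffunP => j; rewrite !ffunE Hy Ho. Qed.

Lemma ext_zero n (y y' : seq 'I_n) : {subset y <= y'} -> extends (st y' [::]) (st y [::]).
Proof.
move=> H j b; rewrite !ffunE in_nil; case: ifP => // /H -> //.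
Qed.

Lemma ext_one n (y o : seq 'I_n) : extends (st y o) (st y [::]).
Proof. by move=> j b; rewrite !ffunE in_nil; case: ifP. Qed.

Lemma fill0 n (y o : seq 'I_n) i : fill (st y o) i false = st (i :: y) o.
Proof. by apply/ffunP => j; rewrite !ffunE in_cons; case: eqP. Qed.

Lemma fill1 n (y o : seq 'I_n) i : i \notin y -> fill (st y o) i true = st y (i :: o).
Proof.
move=> Hi; apply/ffunP => j; rewrite !ffunE in_cons; case: eqP => [->|//].
by rewrite (negbTE Hi).
Qed.

Lemma run_cat n (A : alice n) s1 s2 v : run A (s1 ++ s2) v = run A s2 (run A s1 v).
Proof. by elim: s1 v => //= i s IH v; rewrite IH. Qed.

Lemma run_zero n (A : alice n) s acc : zok A acc s -> run A s (st acc [::]) = st (catrev s acc) [::].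
Proof.
elim: s acc => //= i s IH acc /andP [Hi Hs].
by rewrite (negbTE Hi) fill0 IH.
Qed.

Lemma run_one n (A : alice n) (mA : monotone_alice A) y o acc :
  (forall u, u \in o -> A u (st y [::]) = true) -> (forall u, u \in o -> u \notin y) ->
  run A o (st y acc) = st y (catrev o acc).
Proof.
elim: o acc => //= i o IH acc H1 H2.
have Hi : A i (st y acc) = true.
  have := mA i _ _ (@ext_one _ y acc); rewrite H1 ?mem_head //; by case: (A i _).
rewrite Hi fill1 ?H2 ?mem_head // IH // => u Hu; [apply: H1|apply: H2]; by rewrite in_cons Hu orbT.
Qed.

Lemma zok_filter n (A : alice n) (mA : monotone_alice A) p s acc acc' :
  zok A acc s -> {subset acc' <= acc} -> zok A acc' (filter p s).
Proof.
elim: s acc acc' => //= i s IH acc acc' /andP [Hi Hs] Hsub.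
case: (p i) => /=.
  apply/andP; split.
    have := mA i _ _ (ext_zero Hsub); move: Hi; by case: (A i _); case: (A i _).
  apply: IH Hs _ => u; rewrite !in_cons => /orP [->//|/Hsub ->]; by rewrite orbT.
apply: IH Hs _ => u /Hsub Hu; by rewrite in_cons Hu orbT.
Qed.

Lemma zok_rcons n (A : alice n) s acc u :
  zok A acc s -> ~~ A u (st (catrev s acc) [::]) -> zok A acc (rcons s u).
Proof.
elim: s acc => /= [|i s IH] acc; first by move=> _ ->.
by move=> /andP [-> Hs] Hu /=; apply: IH.
Qed.

Definition buildable n (A : alice n) (y : seq 'I_n) := uniq y && zok A [::] y.

Lemma run_cand n (A : alice n) (mA : monotone_alice A) y x b :
  buildable A y -> x \notin y ->
  (forall u, u \notin y -> u != x -> A u (st y [::]) = true) ->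
  exists s, is_perm_seq (rcons s x) /\
    final_array A s x b = [ffun j => if j == x then b else j \notin y].
Proof.
move=> /andP [Uy Zy] Hx Hf.
set o := [seq j <- enum 'I_n | (j \notin y) && (j != x)].
have memo j : (j \in o) = (j \notin y) && (j != x) by rewrite mem_filter mem_enum andbT.
exists (y ++ o); split.
  have U : uniq (rcons (y ++ o) x).
    rewrite rcons_uniq mem_cat negb_or Hx memo eqxx andbF /= cat_uniq Uy.
    rewrite filter_uniq ?enum_uniq // andbT /=.
    by apply/hasPn => j; rewrite memo => /andP [].
  rewrite /is_perm_seq U /=.
  have P : perm_eq (rcons (y ++ o) x) (enum 'I_n).
    apply: uniq_perm => //; first exact: enum_uniq.
    move=> j; rewrite mem_rcons in_cons mem_cat memo mem_enum.
    by case: (j == x); case: (j \in y).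
  by rewrite (perm_size P) size_enum_ord.
have E : empty_pa n = st [::] [::] by apply/ffunP => j; rewrite !ffunE.
rewrite /final_array run_cat E run_zero // (run_one mA).
- apply/ffunP => j; rewrite !ffunE.
  case: eqP => // /eqP Hj.
  have -> : (j \in catrev y [::]) = (j \in y) by rewrite -/(rev y) mem_rev.
  have -> : (j \in catrev o [::]) = (j \in o) by rewrite -/(rev o) mem_rev.
  by rewrite memo Hj andbT; case: (j \in y).
- move=> u; rewrite memo => /andP [H1 H2].
  rewrite (st_eq (y' := y) (o' := [::])) ?Hf // => j; by rewrite -/(rev y) mem_rev.
- move=> u; rewrite memo -/(rev y) mem_rev; by case/andP.
Qed.
Lemma uniq_size n (y : seq 'I_n) : uniq y -> size y <= n.
Proof. by move=> /card_uniqP <-; rewrite -[n in _ <= n]card_ord max_card. Qed.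

Lemma exists_max n (A : alice n) :
  exists y, buildable A y /\ forall y', buildable A y' -> size y' <= size y.
Proof.
suff H : forall d y, buildable A y -> n - size y <= d ->
  exists z, buildable A z /\ forall y', buildable A y' -> size y' <= size z.
  by apply: (H n [::]) => //; rewrite subn0.
elim=> [|d IH] y By Hd.
  exists y; split => // y' /andP [U _]; apply: leq_trans (uniq_size U) _; lia.
case: (classic (exists y', buildable A y' /\ size y < size y')).
  move=> [y' [By' Hs]]; apply: (IH y') => //.
  have := uniq_size (proj1 (andP By')); lia.
move=> Hn; exists y; split => // y' By'; rewrite leqNgt; apply/negP => Hs.
by apply: Hn; exists y'.
Qed.

Definition V n (y : seq 'I_n) (o : option 'I_n) : {ffun 'I_n -> bool} :=
  [ffun j => (j \notin y) && (if o is Some u then j != u else true)].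

Lemma extend_max n (A : alice n) y u :
  buildable A y -> (forall y', buildable A y' -> size y' <= size y) ->
  u \notin y -> A u (st y [::]) = true.
Proof.
move=> /andP [U Z] M Hu; apply/negPn/negP => Hf.
have : buildable A (rcons y u).
  rewrite /buildable rcons_uniq Hu U /=; apply: zok_rcons => //.
  by rewrite (st_eq (y' := y) (o' := [::])) // => j; rewrite -/(rev y) mem_rev.
by move=> /M; rewrite size_rcons ltnn.
Qed.

Lemma per_x n (A : alice n) (mA : monotone_alice A) y x :
  buildable A y -> (forall y', buildable A y' -> size y' <= size y) ->
  exists o : option 'I_n, (if o is Some u then u \notin y else true) /\
    (x \notin y -> o = None) /\
    exists s b, is_perm_seq (rcons s x) /\ final_array A s x b = V y o.
Proof.
move=> By M.
case: (boolP (x \in y)) => Hx; last first.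
  exists None; split => //; split => //.
  have [s [P F]] := @run_cand _ _ mA _ _ true By Hx
     (fun u Hu _ => extend_max By M Hu).
  exists s, true; split => //; rewrite F; apply/ffunP => j; rewrite !ffunE andbT.
  by case: eqP => // ->; rewrite Hx.
move: (By) => /andP [U Z].
set y1 := filter (predC1 x) y.
have By1 : buildable A y1.
  rewrite /buildable filter_uniq //=; exact: (zok_filter mA _ Z).
have mem1 j : (j \in y1) = (j != x) && (j \in y) by rewrite mem_filter.
have Hx1 : x \notin y1 by rewrite mem1 eqxx.
have Sy1 : size y1 = (size y).-1 by rewrite /y1 -rem_filter // size_rem.
have Sy : 0 < size y by case: (y) Hx.
case: (classic (exists u, u \notin y /\ u != x /\ A u (st y1 [::]) = false)).
  move=> [u [Hu [Hux Hf]]].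
  set y2 := rcons y1 u.
  have Hu1 : u \notin y1 by rewrite mem1 (negbTE Hu) andbF.
  have By2 : buildable A y2.
    move: By1 => /andP [U1 Z1].
    rewrite /buildable rcons_uniq Hu1 U1 /=; apply: zok_rcons => //.
    by rewrite (st_eq (y' := y1) (o' := [::])) ?Hf // => j; rewrite -/(rev y1) mem_rev.
  have M2 : forall y', buildable A y' -> size y' <= size y2.
    by move=> y' /M; rewrite size_rcons Sy1; lia.
  have mem2 j : (j \in y2) = (j == u) || (j \in y1) by rewrite mem_rcons in_cons.
  exists (Some u); split => //; split; first by [].
  have Hx2 : x \notin y2 by rewrite mem2 (negbTE Hx1) orbF eq_sym.
  have [s [P F]] := @run_cand _ _ mA _ _ false By2 Hx2
     (fun w Hw _ => extend_max By2 M2 Hw).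
  exists s, false; split => //; rewrite F; apply/ffunP => j; rewrite !ffunE.
  case: eqP => [->|/eqP Hj]; first by rewrite Hx.
  by rewrite mem2 mem1 Hj /= negb_or andbC.
move=> Hn.
exists None; split => //; split; first by [].
have Hf : forall u, u \notin y1 -> u != x -> A u (st y1 [::]) = true.
  move=> u Hu Hux; apply/negPn/negP => Hf; apply: Hn; exists u; split => //.
    by move: Hu; rewrite mem1 Hux.
  by split => //; apply/negbTE.
have [s [P F]] := @run_cand _ _ mA _ _ false By1 Hx1 Hf.
exists s, false; split => //; rewrite F; apply/ffunP => j; rewrite !ffunE andbT.
case: eqP => [->|/eqP Hj]; first by rewrite Hx.
by rewrite mem1 Hj.
Qed.

Lemma isqrt_sq n : isqrt n * isqrt n <= n.
Proof.
rewrite /isqrt; apply: (big_ind (fun m => m * m <= n)) => //.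
by move=> a b Ha Hb; rewrite /maxn; case: ifP.
Qed.

Lemma isqrt_pos n : 0 < n -> 0 < isqrt n.
Proof.
move=> hn; have h1 : 1 < n.+1 by [].
have := @leq_bigmax_cond _ (fun k : 'I_n.+1 => k * k <= n) (fun k => nat_of_ord k) (Ordinal h1) hn.
by [].
Qed.

Lemma card_bigcup_le n (O : {set 'I_n}) (F : 'I_n -> {set 'I_n}) :
  #|\bigcup_(u in O) F u| <= \sum_(u in O) #|F u|.
Proof.
elim/big_rec2: _ => [|i m U _ Hm]; first by rewrite cards0.
apply: leq_trans (leq_card_setU _ _) _; exact: leq_add.
Qed.

Theorem theorem3 (n : nat) (hn : 0 < n) (A : alice n) (B : bob n) :
  monotone_alice A -> valid A B ->
  exists (s : seq 'I_n) (x : 'I_n) (b : bool),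
    is_perm_seq (rcons s x) /\ isqrt n <= #|B (final_array A s x b)|.
Proof.
move=> mA vAB.
case: (classic (exists (s : seq 'I_n) (x : 'I_n) (b : bool),
    is_perm_seq (rcons s x) /\ isqrt n <= #|B (final_array A s x b)|)) => // Hn.
exfalso.
have H : forall s x b, is_perm_seq (rcons s x) -> #|B (final_array A s x b)| < isqrt n.
  move=> s x b P; rewrite ltnNge; apply/negP => Hle; apply: Hn; by exists s, x, b.
have [y [By M]] := exists_max A.
set k := isqrt n.
pose f o := if #|B (V y o)| < k then B (V y o) else set0.
have fk o : #|f o| <= k.-1.
  rewrite /f; case: ifP => [Hl|_]; first by move: Hl; case: (k) => //.
  by rewrite cards0.
have mf x o s b : is_perm_seq (rcons s x) -> final_array A s x b = V y o -> x \in f o.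
  move=> P F; have := vAB s x b P; have := H s x b P; rewrite F /f => ->; done.
set O := [set u | u \notin y].
have cov : [set: 'I_n] \subset f None :|: \bigcup_(u in O) f (Some u).
  apply/subsetP => x _.
  have [o [Ho [_ [s [b [P F]]]]]] := @per_x _ _ mA _ x By M.
  have := mf x o s b P F; case: o Ho {F} => [u Hu Hxf|_ Hxf].
    by rewrite in_setU; apply/orP; right; apply/bigcupP; exists u; rewrite ?inE.
  by rewrite in_setU Hxf.
have sO : O \subset f None.
  apply/subsetP => x; rewrite inE => Hx.
  have [o [_ [Ho [s [b [P F]]]]]] := @per_x _ _ mA _ x By M.
  by rewrite (Ho Hx) in F; exact: mf x None s b P F.
have c1 : n <= k.-1 + #|O| * k.-1.
  have := subset_leq_card cov; rewrite cardsT card_ord => h.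
  apply: (leq_trans h); apply: leq_trans (leq_card_setU _ _) _.
  apply: leq_add => //; apply: leq_trans (card_bigcup_le _ _) _.
  rewrite -sum_nat_const; exact: leq_sum.
have c2 : #|O| <= k.-1 := leq_trans (subset_leq_card sO) (fk None).
have c3 := isqrt_sq n. have c4 := isqrt_pos hn.
rewrite -/k in c3 c4.
have : k.-1 + #|O| * k.-1 <= k.-1 + k.-1 * k.-1 by rewrite leq_add2l leq_mul2r c2 orbT.
move: c1 c3 c4; case: (k) => // k' /=; nia.
Qed.
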